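(* Let $I\subseteq R$ be an $\mathfrak m$-primary monomial ideal with $\mu_i=x_i^{d_i}\in G(I)$ for $i=1,\dots,n$. Assume that every minimal generator $x_1^{\alpha_1}\cdots x_n^{\alpha_n}\in G(I)$ which is not a corner satisfies $\frac{\alpha_1}{d_1}+\cdots+\frac{\alpha_n}{d_n}\ge \frac n2$. Then $I$ is good.
   Context: Let $\mathbb K$ be a field, $R=\mathbb K[x_1,\dots,x_n]$, $\mathfrak m=\langle x_1,\dots,x_n\rangle$, $\mathbb N=\{0,1,2,\dots\}$. A monomial $x_1^{\alpha_1}\cdots x_n^{\alpha_n}$ is identified with the point $(\alpha_1,\dots,\alpha_n)\in\mathbb N^n$. For a monomial ideal $I$, $G(I)$ denotes its (unique) minimal monomial generating set. If $I$ is an $\mathfrak m$-primary monomial ideal, then for each $i$ there is a unique $d_i\ge1$ with $x_i^{d_i}\in G(I)$; write $\mu_i=x_i^{d_i}$. A corner is a monomial whose exponent vector is $(k_1d_1,\dots,k_nd_n)$ with all $k_i\in\mathbb N$. For $(a_1,\dots,a_n)\in\mathbb N^n$ the box associated to $I$ is $B_{a_1,\dots,a_n}=([a_1d_1,(a_1+1)d_1]\times\cdots\times[a_nd_n,(a_n+1)d_n])\cap\mathbb N^n$; a monomial belongs to a box if its exponent vector does. $I$ is called good if for every integer $l\ge1$, every element of $G(I^l)$ belongs to some box $B_{a_1,\dots,a_n}$ with $a_1+\dots+a_n=l-1$; otherwise $I$ is called bad. *)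

(* Defs.v *)
(* Monomials of K[x_1..x_n] are identified with exponent
   vectors 'I_n -> nat; a monomial ideal is identified with the (up-closed)
   set of monomials it contains. *)
From mathcomp Require Import all_boot all_order all_algebra.
Set Implicit Arguments. Unset Strict Implicit. Unset Printing Implicit Defensive.
Import Order.TTheory GRing.Theory Num.Theory.

Definition expv (n : nat) := 'I_n -> nat.

Definition mdiv n (a b : expv n) : Prop := forall i, a i <= b i.

Definition mmul n (a b : expv n) : expv n := fun i => a i + b i.

Definition xpow n (i : 'I_n) (k : nat) : expv n := fun j => if j == i then k else 0.

Definition mone n : expv n := fun _ => 0.

Definition is_monomial_ideal n (I : expv n -> Prop) : Prop :=
  forall a b, I a -> mdiv a b -> I b.

Definition mingen n (I : expv n -> Prop) (a : expv n) : Prop :=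
  I a /\ forall b, I b -> mdiv b a -> mdiv a b.

Fixpoint ideal_pow n (I : expv n -> Prop) (l : nat) : expv n -> Prop :=
  match l with
  | 0 => fun _ => True
  | l'.+1 => fun a => exists b c, I b /\ ideal_pow I l' c /\ mdiv (mmul b c) a
  end.

(* m-primary: I contained in m (1 not in I) and contains a power of each x_i *)
Definition m_primary n (I : expv n -> Prop) : Prop :=
  ~ I (@mone n) /\ forall i : 'I_n, exists k, I (xpow i k).

Definition corner n (d : 'I_n -> nat) (a : expv n) : Prop :=
  forall i, exists k, a i = k * d i.

Definition in_box n (d : 'I_n -> nat) (c : 'I_n -> nat) (a : expv n) : Prop :=
  forall i, c i * d i <= a i <= (c i).+1 * d i.

Definition good n (d : 'I_n -> nat) (I : expv n -> Prop) : Prop :=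
  forall l, 1 <= l -> forall a, mingen (ideal_pow I l) a ->
    exists c : 'I_n -> nat, (\sum_(i < n) c i = l.-1)%N /\ in_box d c a.

(* Main.v *)
Require Import Defs.
From mathcomp Require Import all_boot all_order all_algebra.
Import Order.TTheory GRing.Theory Num.Theory.
From mathcomp Require Import zify lra.
From Stdlib Require Import Classical.
Set Implicit Arguments.

Lemma comb_fill n (lo hi : 'I_n -> nat) (L : nat) :
  (forall i, lo i <= hi i) -> \sum_(i < n) lo i <= L -> L <= \sum_(i < n) hi i ->
  exists c : 'I_n -> nat, (forall i, lo i <= c i <= hi i) /\ \sum_(i < n) c i = L.
Proof.
move=> Hlh H1 H2.
suff H : forall k, \sum_(i < n) lo i + k <= \sum_(i < n) hi i ->
  exists c : 'I_n -> nat, (forall i, lo i <= c i <= hi i) /\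
     \sum_(i < n) c i = \sum_(i < n) lo i + k.
  have := H (L - \sum_(i < n) lo i). rewrite subnKC //. by apply.
elim=> [|k IH] Hk.
  exists lo; split; last by rewrite addn0.
  by move=> i; rewrite leqnn Hlh.
rewrite addnS in Hk.
have [c [Hc Hs]] := IH (ltnW Hk).
case: (boolP [exists i, c i < hi i]) => [/existsP [i Hi] | /existsPn Hno].
  exists (fun j => c j + (j == i)); split.
    move=> j; have /andP[A B] := Hc j.
    case: (eqVneq j i) => [Hji|Hji].
      subst j; rewrite addn1; apply/andP; split; lia.
    by rewrite /= addn0 A B.
  rewrite big_split /= Hs addnS -addn1; congr (_ + _).
  rewrite (bigD1 i) //= ?eqxx big1 ?addn0 //.
  by move=> j /negbTE ->.
exfalso.
have : \sum_(i < n) hi i <= \sum_(i < n) c i.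
  apply: leq_sum => i _; by rewrite leqNgt Hno.
lia.
Qed.

Lemma mingen_below n (I : expv n -> Prop) x : I x -> exists g, mingen I g /\ mdiv g x.
Proof.
suff H : forall N x, \sum_(i<n) x i = N -> I x -> exists g, mingen I g /\ mdiv g x.
  by move=> Ix; apply: (H _ x erefl Ix).
elim/ltn_ind => N IH y HN Iy.
case: (classic (mingen I y)) => Hm.
  by exists y; split => // i.
have [b Hb] : exists b, ~ (I b -> mdiv b y -> mdiv y b).
  apply: not_all_ex_not => Hall; apply: Hm; split => //.
have [Ib [Hby Hyb]] : I b /\ mdiv b y /\ ~ mdiv y b by tauto.
have [i Hi] : exists i, ~ (y i <= b i) by apply: not_all_ex_not.
have Hlt : \sum_(j<n) b j < N.
  rewrite -HN (bigD1 i) //= [X in _ < X](bigD1 i) //=.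
  have : \sum_(j < n | j != i) b j <= \sum_(j < n | j != i) y j.
    by apply: leq_sum => j _; apply: Hby.
  move/negP: Hi; rewrite -ltnNge => H1 H2; rewrite -addSn; exact: leq_add H1 H2.
have [g [Hg Hgb]] := IH _ Hlt b erefl Ib.
exists g; split => // j; exact: leq_trans (Hgb j) (Hby j).
Qed.

Lemma corner_pow n (I : expv n -> Prop) (d : 'I_n -> nat) :
  is_monomial_ideal I -> (forall i, mingen I (xpow i (d i))) ->
  forall l (f : 'I_n -> nat), \sum_(i<n) f i = l -> ideal_pow I l (fun i => f i * d i).
Proof.
move=> Hid Hmu; elim=> [|l IH] f Hs //=.
have [i Hi] : exists i, 0 < f i.
  apply: NNPP => Hno.
  have : \sum_(i<n) f i = 0.
    apply: big1 => i _. apply/eqP; rewrite -leqn0 leqNgt; apply/negP => H; apply: Hno; by exists i.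
  by rewrite Hs.
exists (xpow i (d i)), (fun j => (f j - (j == i)) * d j); split; first exact: (proj1 (Hmu i)).
split.
  apply: IH.
  rewrite (bigD1 i) //= in Hs; rewrite (bigD1 i) //= eqxx subn1 (eq_bigr f); last first.
    by move=> j /negbTE ->; rewrite subn0.
  lia.
move=> j; rewrite /mmul /xpow.
case: (eqVneq j i) => [->|Hji].
  by rewrite ?eqxx -mulSn subn1 prednK.
by rewrite ?(negbTE Hji) subn0 add0n.
Qed.

Lemma inv_pow n (I : expv n -> Prop) (d : 'I_n -> nat) :
  is_monomial_ideal I -> ~ I (@mone n) ->
  (forall i : 'I_n, mingen I (xpow i (d i))) ->
  (forall a : expv n, mingen I a -> ~ corner d a ->
     (n%:R / 2%:R <= \sum_(i < n) ((a i)%:R / (d i)%:R) :> rat)%R) ->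
  forall l a, ideal_pow I l a ->
  exists (e : 'I_n -> nat) (b : expv n) (q : nat),
    [/\ \sum_(i<n) e i + q = l, (0 < q -> 1 < n),
        (q%:R * (n%:R / 2%:R) <= \sum_(i < n) ((b i)%:R / (d i)%:R) :> rat)%R &
        forall i, e i * d i + b i <= a i].
Proof.
move=> Hid Hone Hmu Hnc; elim=> [|l IH] a /=.
  move=> _; exists (fun _ => 0), (fun _ => 0), 0; split => //.
  - by rewrite big1.
  - by rewrite mul0r; apply: sumr_ge0 => i _; rewrite divr_ge0 ?ler0n.
move=> [g [c [Ig [Hc Hgc]]]].
have [e [b [q [Hs Hq HT Heb]]]] := IH c Hc.
have [g' [Hg' Hg'g]] := @mingen_below n I g Ig.
case: (classic (corner d g')) => [Hcor | Hncor].
  have [k Hk] : exists k, d k <= g' k.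
    apply: NNPP => Hno. apply: Hone. apply: Hid (proj1 Hg') _ => i.
    have [m Hm] := Hcor i.
    case: m Hm => [|m] Hm; first by rewrite Hm.
    exfalso; apply: Hno; exists i; rewrite Hm mulSn; lia.
  exists (fun j => e j + (j == k)), b, q; split => //.
    rewrite big_split /= -Hs -addn1 addnAC; congr (_ + _).
    rewrite (bigD1 k) //= eqxx big1 ?addn0 // => j /negbTE ->; done.
  move=> j; have := Heb j; have := Hgc j; have := Hg'g j; rewrite /mmul.
  case: (eqVneq j k) => [->|Hjk].
    rewrite ?eqxx; lia.
  rewrite ?(negbTE Hjk) addn0; lia.
have HTg := Hnc g' Hg' Hncor.
have Hn2 : 1 < n.
  rewrite ltnNge; apply/negP => Hn1.
  have Heq : forall i j : 'I_n, i = j.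
    move=> i j; apply: ord_inj; have := ltn_ord i; have := ltn_ord j; lia.
  apply: Hncor => i; exists 1; rewrite mul1n.
  have [Hmi Hmimin] := Hmu i.
  case: (leqP (d i) (g' i)) => H.
    have Hd : mdiv (xpow i (d i)) g'.
      by move=> j; rewrite (Heq j i) /xpow eqxx.
    have := (proj2 Hg') _ Hmi Hd i; rewrite /xpow eqxx => H'.
    by apply/eqP; rewrite eqn_leq H H'.
  have Hd : mdiv g' (xpow i (d i)).
    by move=> j; rewrite (Heq j i) /xpow eqxx; exact: ltnW.
  have := Hmimin _ (proj1 Hg') Hd i; rewrite /xpow eqxx => H'.
  lia.
exists e, (fun j => b j + g' j), q.+1; split.
- by rewrite addnS Hs.
- by [].
- rewrite (eq_bigr (fun i => ((b i)%:R / (d i)%:R + (g' i)%:R / (d i)%:R : rat)%R)); last first.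
    by move=> i _; rewrite natrD mulrDl.
  rewrite big_split /= -addn1 natrD mulrDl mul1r. exact: lerD.
- move=> j; have := Heb j; have := Hgc j; have := Hg'g j; rewrite /mmul; lia.
Qed.

Unset Implicit Arguments.

Theorem mainTheorem3 (n : nat) (I : expv n -> Prop) (d : 'I_n -> nat) :
  is_monomial_ideal I ->
  m_primary I ->
  (forall i : 'I_n, mingen I (xpow i (d i))) ->
  (forall a : expv n, mingen I a -> ~ corner d a ->
     (n%:R / 2%:R <= \sum_(i < n) ((a i)%:R / (d i)%:R) :> rat)%R) ->
  good d I.
Proof.
move=> Hid [Hone Hprim] Hmu Hnc l Hl a [Ha Hmin].
have dpos : forall i, 0 < d i.
  move=> i; rewrite lt0n; apply/negP => /eqP d0.
  apply: Hone; have [H _] := Hmu i. apply: Hid H _ => j.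
  by rewrite /xpow d0; case: (j == i).
pose lo := fun i => (a i).-1 %/ d i.
pose hi := fun i => a i %/ d i.
have Hlh : forall i, lo i <= hi i by move=> i; apply: leq_div2r; exact: leq_pred.
have Hlow : l.-1 <= \sum_(i<n) hi i.
  have [e [b [q [Hs Hq HT Heb]]]] := @inv_pow n I d Hid Hone Hmu Hnc l a Ha.
  have H1 : \sum_(i<n) e i + \sum_(i<n) (b i %/ d i) <= \sum_(i<n) hi i.
    rewrite -big_split; apply: leq_sum => i _ /=.
    rewrite /hi -(divnMDl _ _ (dpos i)); apply: leq_div2r; exact: Heb.
  have H2 : q <= (\sum_(i<n) (b i %/ d i)).+1.
    case: q Hs Hq HT => [|q] Hs Hq HT; first by [].
    have Hn := Hq erefl.
    set F := \sum_(i<n) (b i %/ d i).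
    have Hlt : (\sum_(i < n) ((b i)%:R / (d i)%:R) < F%:R + n%:R :> rat)%R.
      have -> : (F%:R + n%:R = \sum_(i<n) ((b i %/ d i)%:R + 1) :> rat)%R.
        by rewrite big_split /= natr_sum sumr_const card_ord.
      apply: ltr_sum.
        by apply/hasP; exists (Ordinal (ltnW Hn)); rewrite ?mem_index_enum.
      move=> i _; rewrite ltr_pdivrMr ?ltr0n //.
      rewrite -[1%R]/(1%:R)%R -natrD -natrM ltr_nat addn1; exact: ltn_ceil.
    have : ((q.+1 * n)%:R < (2 * (F + n))%:R :> rat)%R.
      rewrite !natrM natrD. rewrite mulrA in HT. lra.
    rewrite ltr_nat => H. nia.
  lia.
have Hup : \sum_(i<n) lo i <= l.-1.
  rewrite leqNgt; apply/negP => Hgt.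
  have Z1 : \sum_(i<n) (fun _ : 'I_n => 0) i <= l by rewrite big1.
  have Z2 : l <= \sum_(i<n) lo i by lia.
  have [f [Hf Hfs]] := @comb_fill n (fun _ => 0) lo l (fun i => leq0n _) Z1 Z2.
  have Hm := @corner_pow n I d Hid Hmu l f Hfs.
  have Hdiv : mdiv (fun i => f i * d i) a.
    move=> i; have /andP[_ H] := Hf i.
    apply: leq_trans (leq_mul H (leqnn _)) _.
    exact: leq_trans (leq_trunc_div _ _) (leq_pred _).
  have Had := Hmin _ Hm Hdiv.
  have H0 : forall i, f i = 0.
    move=> i; have := Had i; have /andP[_ H] := Hf i.
    have := leq_trunc_div (a i).-1 (d i).
    have := leq_mul H (leqnn (d i)).
    rewrite /lo => A B C.
    have Ha0 : a i = 0 by lia.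
    by move: H; rewrite /lo Ha0 div0n leqn0 => /eqP.
  move: Hfs; rewrite big1 //; lia.
have [c [Hc Hcs]] := @comb_fill n lo hi l.-1 Hlh Hup Hlow.
exists c; split => // i; have /andP[A B] := Hc i.
apply/andP; split.
  apply: leq_trans (leq_mul B (leqnn _)) _; exact: leq_trunc_div.
apply: leq_trans _ (leq_mul (A : (lo i).+1 <= (c i).+1) (leqnn (d i))).
rewrite /lo; case: (a i) => [|m] //=; exact: ltn_ceil.
Qed.
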